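(* Let $U$ be a finite-dimensional complex vector space with basis $\mathbb B$, $w:U\to U$ linear, $\xi:\mathbb B\to\mathbb B$ a bijection and $\le$ a preorder on $\mathbb B$ such that $w$ acts on $(U,\mathbb B,\le)$ by $\xi$ up to lower-order terms. Let $\preceq$ be a linearisation of $\le$ (a total order on $\mathbb B$ with $x\prec y$ whenever $x<y$), and let $[w]_{(\mathbb B,\preceq)}$ be the matrix of $w$ in the ordered basis $(\mathbb B,\preceq)$. Then $[w]_{(\mathbb B,\preceq)}$ has a unique QR decomposition $QR$ (with $Q$ orthogonal and $R$ upper triangular with positive diagonal entries), and $Q$ is a generalised permutation matrix for $\xi$.
   Context: $w$ acts on $(U,\mathbb B,\le)$ by $\xi$ up to lower-order terms if for every $x\in\mathbb B$ there are integers $a_y$ with $w(x)=\pm\xi(x)+\sum_{y<x}a_y\xi(y)$, the sign depending only on the equivalence class of $x$ under the equivalence relation induced by $\le$. A generalised permutation matrix for $\xi$ is a matrix whose only nonzero entries are $\pm1$ in the positions $(\xi(x),x)$, $x\in\mathbb B$. *)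

(* Defs.v *)
From HB Require Import structures.
From mathcomp Require Import all_boot all_order all_algebra all_fingroup.
From mathcomp Require Import reals.
From mathcomp Require Import complex.

Set Implicit Arguments.
Unset Strict Implicit.
Unset Printing Implicit Defensive.

Import Order.TTheory GRing.Theory Num.Theory.
Local Open Scope ring_scope.

Definition preorder_on (B : finType) (le : rel B) :=
  reflexive le /\ transitive le.

Definition pre_lt (B : finType) (le : rel B) : rel B :=
  fun y x => le y x && ~~ le x y.

Definition pre_equiv (B : finType) (le : rel B) : rel B :=
  fun x y => le x y && le y x.

Definition acts_up_to_lower (K : fieldType) (U : lmodType K) (B : finType)
    (b : B -> U) (w : U -> U) (xi : B -> B) (le : rel B) :=
  exists s : B -> bool,
    (forall x y, pre_equiv le x y -> s x = s y) /\
    forall x, exists a : B -> int,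
      w (b x) = (-1) ^+ s x *: b (xi x)
                + \sum_(y | pre_lt le y x) (a y)%:~R *: b (xi y).

(* A linearisation of le, given as the ordered enumeration
   v : 'I_#|B| -> B of B (v i is the i-th element for the total order);
   v must be a bijection and x < y (strictly, for le) forces x before y. *)
Definition linearisation (B : finType) (le : rel B) (v : 'I_#|B| -> B) :=
  bijective v /\ forall i j, pre_lt le (v i) (v j) -> (i < j)%N.

Definition ordered_basis (K : fieldType) (U : vectType K) (B : finType)
    (b : B -> U) (v : 'I_#|B| -> B) : #|B|.-tuple U :=
  [tuple b (v i) | i < #|B|].

Definition mx_in_basis (K : fieldType) (U : vectType K) (B : finType)
    (b : B -> U) (v : 'I_#|B| -> B) (w : U -> U) : 'M[K]_#|B| :=
  \matrix_(i, j) coord (ordered_basis b v) i (w (b (v j))).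

Definition orthogonal_mx (R : realType) n (Q : 'M[R]_n) := Q^T *m Q = 1%:M.

Definition upper_pos_diag (R : realType) n (Rm : 'M[R]_n) :=
  (forall i j : 'I_n, (j < i)%N -> Rm i j = 0) /\ (forall i, 0 < Rm i i).

Definition is_QR (R : realType) n (M : 'M[R[i]]_n) (Q Rm : 'M[R]_n) :=
  [/\ orthogonal_mx Q, upper_pos_diag Rm & M = map_mx (real_complex R) (Q *m Rm)].

Definition gen_perm_mx_for (R : realType) (B : finType) (xi : B -> B)
    (v : 'I_#|B| -> B) (Q : 'M[R]_#|B|) :=
  forall i j, if v i == xi (v j) then Q i j = 1 \/ Q i j = -1 else Q i j = 0.

(* Main.v *)
Require Import Defs.
From HB Require Import structures.
From mathcomp Require Import all_boot all_order all_algebra all_fingroup.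
From mathcomp Require Import reals.
From mathcomp Require Import complex.

Import Order.TTheory GRing.Theory Num.Theory.
Local Open Scope ring_scope.

Lemma orth_tri_eq (R : realType) n (X R1 R2 : 'M[R]_n) :
  X^T *m X = 1%:M -> upper_pos_diag R1 -> upper_pos_diag R2 ->
  X *m R1 = R2 -> X = 1%:M.
Proof.
move=> HX [T1 P1] [T2 P2] HXR.
suff H : forall j (jj : 'I_n), (jj < j)%N -> forall k, X k jj = (k == jj)%:R.
  by apply/matrixP => k jj; rewrite (H jj.+1) // mxE.
elim=> [//|j IH] jj; rewrite ltnS leq_eqVlt => /orP [/eqP Ej | ]; last exact: IH.
have eqj : forall k : 'I_n, (k == jj) = (val k == j) by move=> k; rewrite -Ej.
have orth : forall k l, \sum_i X i k * X i l = (k == l)%:R.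
  by move=> k l; have := congr1 (fun M : 'M[R]_n => M k l) HX; rewrite !mxE => <-;
     apply: eq_bigr => i _; rewrite mxE.
have col : forall k : 'I_n, (j <= k)%N -> R2 k jj = X k jj * R1 jj jj.
  move=> k hk; rewrite -HXR mxE (bigD1 jj) //= big1 ?addr0 // => l hl.
  case: (ltnP l j) => hlj.
    by rewrite IH // (_ : (k == l) = false) ?mul0r //; apply/negbTE;
       rewrite neq_ltn (leq_trans hlj hk) orbT.
  by rewrite T1 ?mulr0 // ltn_neqAle Ej hlj andbT eq_sym -eqj.
have low : forall k : 'I_n, (k < j)%N -> X k jj = 0.
  move=> k hk; have := orth k jj.
  rewrite eqj (_ : (val k == j) = false); last by apply/negbTE; rewrite neq_ltn hk.
  rewrite (bigD1 k) //= big1 ?addr0; first by rewrite IH // eqxx mul1r.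
  by move=> i hi; rewrite IH // (negbTE hi) mul0r.
have up : forall k : 'I_n, (j < k)%N -> X k jj = 0.
  move=> k hk; have := col k (ltnW hk); rewrite T2 ?Ej //.
  move/esym/eqP; rewrite mulf_eq0 (gt_eqF (P1 jj)) orbF => /eqP //.
have sq : X jj jj ^+ 2 = 1.
  have := orth jj jj; rewrite eqxx (bigD1 jj) //= big1 ?addr0 ?expr2 //.
  move=> i hi; case: (ltngtP i j) => hij.
  - by rewrite low // mul0r.
  - by rewrite up // mul0r.
  - by case/eqP: hi; apply: val_inj; rewrite /= hij.
have pos : 0 < X jj jj.
  have := P2 jj; rewrite col ?Ej // pmulr_lgt0 //.
move=> k; case: (ltngtP k j) => hk.
- by rewrite low // eqj (_ : (val k == j) = false) //; apply/negbTE; rewrite neq_ltn hk.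
- by rewrite up // eqj (_ : (val k == j) = false) //; apply/negbTE; rewrite neq_ltn hk orbT.
- have -> : k = jj by apply: val_inj; rewrite /= hk.
  rewrite eqxx; move/eqP: sq; rewrite sqrf_eq1 => /orP [/eqP //|/eqP e].
  by move: pos; rewrite e ltr0N1.
Qed.

Lemma sign_sq (R : pzRingType) (b : bool) : (-1) ^+ b * (-1) ^+ b = 1 :> R.
Proof. by rewrite -signr_addb addbb expr0. Qed.

Lemma exist_QR (R : realType) (U : vectType R[i]) (B : finType)
    (b : B -> U) (w : {linear U -> U}) (xi : {perm B}) (le : rel B)
    (v : 'I_#|B| -> B) :
  basis_of fullv [seq b x | x <- enum B] ->
  preorder_on le ->
  acts_up_to_lower b w xi le ->
  linearisation le v ->
  exists (Q Rm : 'M[R]_#|B|),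
    [/\ orthogonal_mx Q, upper_pos_diag Rm,  mx_in_basis b v w = map_mx (real_complex R) (Q *m Rm)
      & gen_perm_mx_for xi v Q].
Proof.
move=> Hbasis _ [s [_ Hs]] [[iv vK ivK] Hlin].
have [a Ha] := fin_all_exists Hs.
have Hfree : free (ordered_basis b v).
  move: Hbasis; rewrite basisEfree => /and3P [Hf _ _].
  rewrite (perm_free (Y := [seq b x | x <- enum B])) //.
  rewrite /ordered_basis /= -val_ord_tuple -map_comp map_comp.
  rewrite map_id -enumT (map_comp b v); apply: perm_map; apply: uniq_perm.
  - by rewrite (map_inj_uniq (can_inj vK)) enum_uniq.
  - exact: enum_uniq.
  - move=> x; rewrite mem_enum; apply/mapP; exists (iv x) => //.
    by rewrite mem_enum.
have coordb : forall i (y : B), coord (ordered_basis b v) i (b y) = (y == v i)%:R.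
  move=> i y; rewrite -{1}(ivK y).
  rewrite (_ : b (v (iv y)) = (ordered_basis b v)`_(iv y)); last first.
    by rewrite /ordered_basis -tnth_nth tnth_mktuple.
  rewrite coord_free //; congr (_%:R).
  by rewrite -(inj_eq (can_inj vK)) ivK.
pose cr (y x : B) : R :=
  if y == x then (-1) ^+ s x else if pre_lt le y x then (a x y)%:~R else 0.
pose Q0 : 'M[R]_#|B| := \matrix_(i, k) (if v i == xi (v k) then (-1) ^+ s (v k) else 0).
pose R0 : 'M[R]_#|B| := \matrix_(k, j) ((-1) ^+ s (v k) * cr (v k) (v j)).
have HQR : forall i j, (Q0 *m R0) i j = cr ((xi^-1)%g (v i)) (v j).
  move=> i j; rewrite mxE (bigD1 (iv ((xi^-1)%g (v i)))) //= big1 ?addr0.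
    by rewrite !mxE !ivK permKV eqxx mulrA sign_sq mul1r.
  move=> k hk; rewrite !mxE (_ : (v i == xi (v k)) = false) ?mul0r //.
  by apply: contraNF hk => /eqP ->; rewrite permK vK.
exists Q0, R0; split.
- apply/matrixP => k l; rewrite !mxE (bigD1 (iv (xi (v k)))) //= big1 ?addr0.
    rewrite !mxE ivK eqxx (inj_eq (@perm_inj _ xi)) (inj_eq (can_inj vK)).
    by case: eqP => [->|_]; rewrite ?sign_sq ?mulr0.
  move=> i hi; rewrite !mxE (_ : (v i == xi (v k)) = false) ?mul0r //.
  by apply: contraNF hi => /eqP <-; rewrite vK.
- split.
    move=> k j hjk; rewrite mxE /cr (inj_eq (can_inj vK)).
    case: eqP => [e|_]; first by move: hjk; rewrite e ltnn.
    case: ifP => [/Hlin hkj|_]; last by rewrite mulr0.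
    by have := ltn_trans hkj hjk; rewrite ltnn.
  by move=> k; rewrite mxE /cr eqxx sign_sq ltr01.
- apply/matrixP => i j; rewrite [LHS]mxE [RHS]mxE HQR Ha raddfD /= linearZ linear_sum /= coordb.
  under eq_bigr => y _ do rewrite linearZ /= coordb (canF_eq (permK xi)).
  rewrite (canF_eq (permK xi)).
  move: (v j) ((xi^-1)%g (v i)) => x y0; rewrite /cr.
  have nlt : forall z, pre_lt le z z = false by move=> z; rewrite /pre_lt andbN.
  case: (eqVneq y0 x) => [->|ne].
    rewrite ?eqxx mulr1 big1 ?addr0 ?rmorph_sign // => y hy.
    rewrite (_ : (y == x) = false) ?mulr0 //; apply: contraTF hy => /eqP ->.
    by rewrite nlt.
  rewrite ?eq_sym ?(negbTE ne) mulr0 add0r.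
  case: (boolP (pre_lt le y0 x)) => hp.
    rewrite (bigD1 y0) //= eqxx mulr1 big1 ?addr0 ?rmorph_int // => y /andP [_ hy].
    by rewrite (negbTE hy) mulr0.
  rewrite big1 ?rmorph0 // => y hy; case: eqP => [e|_]; last by rewrite mulr0.
  by move: hy; rewrite e (negbTE hp).
- move=> i j; rewrite mxE; case: ifP => h; rewrite h //.
  by case: (s (v j)); [right; rewrite expr1 | left; rewrite expr0].
Qed.

Lemma qr_unique (R : realType) n (Q Q' R1 R2 : 'M[R]_n) :
  orthogonal_mx Q -> orthogonal_mx Q' -> upper_pos_diag R1 -> upper_pos_diag R2 ->
  Q *m R1 = Q' *m R2 -> Q' = Q /\ R2 = R1.
Proof.
rewrite /orthogonal_mx => HQ HQ' U1 U2 E.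
have HQQ : Q *m Q^T = 1%:M by apply: mulmx1C.
have X1 : (Q^T *m Q')^T *m (Q^T *m Q') = 1%:M.
  by rewrite trmx_mul trmxK mulmxA -(mulmxA Q'^T) HQQ mulmx1 HQ'.
have X2 : (Q^T *m Q') *m R2 = R1 by rewrite -mulmxA -E mulmxA HQ mul1mx.
have X := @orth_tri_eq _ _ _ _ _ X1 U2 U1 X2.
split; last by rewrite -X2 X mul1mx.
by rewrite -(mul1mx Q') -HQQ -mulmxA X mulmx1.
Qed.

Theorem lemmaA2 (R : realType) (U : vectType R[i]) (B : finType)
    (b : B -> U) (w : {linear U -> U}) (xi : {perm B}) (le : rel B)
    (v : 'I_#|B| -> B) :
  basis_of fullv [seq b x | x <- enum B] ->
  preorder_on le ->
  acts_up_to_lower b w xi le ->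
  linearisation le v ->
  exists (Q Rm : 'M[R]_#|B|),
    [/\ is_QR (mx_in_basis b v w) Q Rm,
        (forall Q' Rm', is_QR (mx_in_basis b v w) Q' Rm' -> Q' = Q /\ Rm' = Rm)
      & gen_perm_mx_for xi v Q].
Proof.
move=> H1 H2 H3 H4.
have [Q [Rm [HQ HR HM HP]]] := @exist_QR _ _ _ _ _ _ _ _ H1 H2 H3 H4.
exists Q, Rm; split => //.
move=> Q' Rm' [HQ' HR' HM'].
apply: qr_unique => //.
by apply: (map_mx_inj (f := real_complex R)); rewrite -HM -HM'.
Qed.
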